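(* Let $R$ be a ring. (a) If $\dim R=0$ then $R$ is Cohen-Macaulay. (b) If $R$ is a one-dimensional domain then $R$ is Cohen-Macaulay.
   Context: All rings are commutative with identity; $\dim$ is Krull dimension. For $x\in R$ let $C(x)$ be the complex $0\to R\to R_x\to 0$ ($R$ in degree $0$, natural localization map); for a finite sequence $\mathbf x=x_1,\dots,x_\ell$ put $C(\mathbf x)=C(x_1)\otimes_R\cdots\otimes_R C(x_\ell)$ and let $H^i_{\mathbf x}(M)$ be the $i$th cohomology of $C(\mathbf x)\otimes_R M$; $\ell(\mathbf x)=\ell$. Let $K(x)$ be $0\to R\xrightarrow{x}R\to 0$ (degrees $1,0$), $K(\mathbf x)=K(x_1)\otimes\cdots\otimes K(x_\ell)$, $H_i(\mathbf x)$ its homology. For $m\ge n$ the chain map $K(\mathbf x^m)\to K(\mathbf x^n)$ ($\mathbf x^m=x_1^m,\dots,x_\ell^m$) is the tensor product of the maps $K(x_i^m)\to K(x_i^n)$ given by multiplication by $x_i^{m-n}$ in degree $1$ and identity in degree $0$. $\mathbf x$ is weakly proregular if for every $n$ there is $m\ge n$ with $H_i(\mathbf x^m)\to H_i(\mathbf x^n)$ zero for all $i\ge1$. $\mathbf x$ is a parameter sequence on $R$ if it is weakly proregular, $(\mathbf x)R\neq R$, and $H^{\ell(\mathbf x)}_{\mathbf x}(R)_p\neq0$ for every prime $p\supseteq(\mathbf x)R$ (the empty sequence is a parameter sequence, and also a regular sequence). It is a strong parameter sequence if $x_1,\dots,x_i$ is a parameter sequence for each $i=1,\dots,\ell(\mathbf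 x)$. A regular sequence on $M$: each $x_i$ is a non-zero-divisor on $M/(x_1,\dots,x_{i-1})M$ and $M\neq(\mathbf x)M$. A ring $R$ is Cohen-Macaulay if every strong parameter sequence on $R$ is a regular sequence on $R$. *)

(* Defs.v *)
From HB Require Import structures.
From mathcomp Require Import all_boot all_order all_algebra.
Set Implicit Arguments. Unset Strict Implicit. Unset Printing Implicit Defensive.
Import Order.TTheory GRing.Theory Num.Theory.
Local Open Scope ring_scope.

Section Defs.
Variable R : comPzRingType.

Definition is_ideal (I : R -> Prop) : Prop :=
  [/\ I 0, (forall a b, I a -> I b -> I (a + b)) & (forall r a, I a -> I (r * a))].

Definition is_prime_ideal (P : R -> Prop) : Prop :=
  [/\ is_ideal P, ~ P 1 & (forall a b, P (a * b) -> P a \/ P b)].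

Definition prime_chain (n : nat) (c : nat -> R -> Prop) : Prop :=
  (forall i, (i <= n)%N -> is_prime_ideal (c i)) /\
  (forall i, (i < n)%N -> (forall r, c i r -> c i.+1 r) /\ exists r, c i.+1 r /\ ~ c i r).

Definition krull_dim_eq (n : nat) : Prop :=
  (exists c, prime_chain n c) /\ ~ (exists c, prime_chain n.+1 c).

Definition in_ideal (s : seq R) (r : R) : Prop :=
  exists c : 'I_(size s) -> R, r = \sum_(i < size s) c i * s`_i.

Definition regular_seq (x : seq R) : Prop :=
  (forall i, (i < size x)%N ->
     forall r, in_ideal (take i x) (x`_i * r) -> in_ideal (take i x) r) /\
  (size x = 0%N \/ ~ in_ideal x 1).

(* Koszul complex K(f_0,...,f_{l-1}) = tensor of the K(f_j): a chain is a
   function on subsets J of {0..l-1} (coefficient of e_J); degree = #|J|.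
   d(e_{j_1 < ... < j_k}) = sum_t (-1)^(t-1) f_{j_t} e_{J \ j_t}. *)
Definition koszul_d (l : nat) (f : nat -> R) (c : {set 'I_l} -> R)
  : {set 'I_l} -> R :=
  fun J => \sum_(j : 'I_l | j \notin J)
             (-1) ^+ #|[set k in J | (k < j)%N]| * f j * c (j |: J).

Definition in_degree (l : nat) (i : nat) (c : {set 'I_l} -> R) : Prop :=
  forall J : {set 'I_l}, #|J| <> i -> c J = 0.

Definition pow_seq (x : seq R) (m : nat) : nat -> R := fun j => x`_j ^+ m.

(* The map H_i(x^m) -> H_i(x^n) induced by the chain map
   e_J |-> (prod_{j in J} x_j^(m-n)) e_J is zero. *)
Definition koszul_map_zero (x : seq R) (m n i : nat) : Prop :=
  forall c : {set 'I_(size x)} -> R,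
    in_degree i c -> (forall J, koszul_d (pow_seq x m) c J = 0) ->
    exists b : {set 'I_(size x)} -> R, in_degree i.+1 b /\
      forall J, koszul_d (pow_seq x n) b J
                = (\prod_(j in J) x`_j ^+ (m - n)) * c J.

Definition weakly_proregular (x : seq R) : Prop :=
  forall n, (0 < n)%N -> exists m, (n <= m)%N /\
    forall i, (1 <= i)%N -> koszul_map_zero x m n i.

(* Top Cech cohomology H^l_x(R) = coker( (+)_i R_{x_1..^x_i..x_l} -> R_{x_1...x_l} ).
   Writing F = x_1...x_l, the class of a/F^n is zero iff
   a/F^n = sum_i b_i/(F/x_i)^m = (sum_i b_i x_i^m)/F^m in R_F,
   i.e. F^k (a F^m - (sum_i b_i x_i^m) F^n) = 0 for some k. *)
Definition cech_top_zero (x : seq R) (a : R) (n : nat) : Prop :=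
  let F := \prod_(i < size x) x`_i in
  exists (b : 'I_(size x) -> R) (m k : nat),
    F ^+ k * (a * F ^+ m - (\sum_(i < size x) b i * x`_i ^+ m) * F ^+ n) = 0.

(* (H^l_x(R))_p <> 0 : some class a/F^n is not killed by any s outside p. *)
Definition top_cech_loc_nonzero (x : seq R) (p : R -> Prop) : Prop :=
  exists (a : R) (n : nat), forall s, ~ p s -> ~ cech_top_zero x (s * a) n.

Definition parameter_seq (x : seq R) : Prop :=
  size x = 0%N \/
  [/\ weakly_proregular x, ~ in_ideal x 1 &
      forall p, is_prime_ideal p -> (forall i, (i < size x)%N -> p x`_i) ->
        top_cech_loc_nonzero x p].

Definition strong_parameter_seq (x : seq R) : Prop :=
  forall i, (1 <= i <= size x)%N -> parameter_seq (take i x).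

Definition cohen_macaulay : Prop :=
  forall x : seq R, strong_parameter_seq x -> regular_seq x.

End Defs.

(* Main.v *)
Require Import Defs.
From mathcomp Require Import all_boot all_order all_algebra.
From mathcomp Require Import boolp classical_sets.
From Stdlib Require Import Classical.
From mathcomp Require Import ring.
Set Implicit Arguments. Unset Strict Implicit. Unset Printing Implicit Defensive.
Import Order.TTheory GRing.Theory Num.Theory.
Local Open Scope ring_scope.

Section Aux.
Variable R : comPzRingType.

Lemma in_ideal0 (l : seq R) : in_ideal l 0.
Proof. by exists (fun _ => 0); rewrite big1 // => i _; rewrite mul0r. Qed.

Lemma in_idealD (l : seq R) a b : in_ideal l a -> in_ideal l b -> in_ideal l (a + b).
Proof.
move=> [c ->] [d ->]; exists (fun i => c i + d i).
by rewrite -big_split /=; apply: eq_bigr => i _; rewrite mulrDl.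
Qed.

Lemma in_idealM (l : seq R) r a : in_ideal l a -> in_ideal l (r * a).
Proof.
move=> [c ->]; exists (fun i => r * c i).
by rewrite mulr_sumr; apply: eq_bigr => i _; rewrite mulrA.
Qed.

Lemma in_ideal_nil (r : R) : in_ideal [::] r -> r = 0.
Proof. by move=> [c ->]; rewrite big_ord0. Qed.

Lemma in_ideal_1 (x0 r : R) : in_ideal [:: x0] r -> exists c, r = c * x0.
Proof. by move=> [c ->]; rewrite big_ord1; exists (c ord0). Qed.

Lemma in_ideal_gen (l : seq R) i : (i < size l)%N -> in_ideal l l`_i.
Proof.
move=> il; exists (fun j => ((j : nat) == i)%:R).
rewrite (bigD1 (Ordinal il)) //= eqxx mul1r big1 ?addr0 // => j /negbTE.
by rewrite -val_eqE /= => ->; rewrite mul0r.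
Qed.

Lemma zorn_prime (l : seq R) (S : R -> Prop) :
  S 1 -> (forall a b, S a -> S b -> S (a * b)) ->
  (forall r, S r -> ~ in_ideal l r) ->
  exists q, is_prime_ideal q /\ (forall r, in_ideal l r -> q r) /\
            (forall r, S r -> ~ q r).
Proof.
move=> S1 SM Sdis.
pose P (A : set R) := [/\ (forall a b, A a -> A b -> A (a + b)),
   (forall r a, A a -> A (r * a)), (forall r, S r -> ~ A r) &
   ((forall r, in_ideal l r -> A r) \/ A = set0)].
have PI : P (in_ideal l).
  split; [exact: in_idealD | exact: in_idealM | exact: Sdis | by left].
have [A [[AD AM AS AI] Amax]] : exists A, P A /\ forall B, proper A B -> ~ P B.
  apply: Zorn_bigcup => F FP Ftot.
  have [Fe|Fne] := classic (exists X, F X /\ (exists r, X r)); last first.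
    split.
    - by move=> a b [X FX Xa]; exfalso; apply: Fne; exists X; split => //; exists a.
    - by move=> r a [X FX Xa]; exfalso; apply: Fne; exists X; split => //; exists a.
    - by move=> r _ [X FX Xa]; apply: Fne; exists X; split => //; exists r.
    right; apply/funext => r; apply/propext; split => // -[X FX Xr].
    by exfalso; apply: Fne; exists X; split => //; exists r.
  case: Fe => X0 [FX0 [r0 X0r0]].
  split.
  - move=> a b [X FX Xa] [Y FY Yb].
    have [XY|YX] := Ftot _ _ FX FY.
    + by exists Y => //; case: (FP _ FY) => YD _ _ _; apply: YD => //; apply: XY.
    + by exists X => //; case: (FP _ FX) => XD _ _ _; apply: XD => //; apply: YX.
  - by move=> r a [X FX Xa]; exists X => //; case: (FP _ FX) => _ XM _ _; apply: XM.
  - by move=> r Sr [X FX Xr]; case: (FP _ FX) => _ _ XS _; apply: (XS r).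
  - left => r Ir; exists X0 => //; case: (FP _ FX0) => _ _ _ [|X0e]; first by apply.
    by rewrite X0e in X0r0.
have {}AI : forall r, in_ideal l r -> A r.
  case: AI => // Ae; exfalso; apply: (Amax (in_ideal l)) => //.
  rewrite Ae; split; first by move=> r [].
  by move=> H; have := H 0 (in_ideal0 l).
exists A; split => //; split => //.
- split => //; exact/AI/in_ideal0.
- by apply: AS.
move=> a b Aab; apply: NNPP => /not_or_and [Aa Ab].
pose B (c : R) := fun x => exists q r, A q /\ x = q + r * c.
have AB c : forall x, A x -> B c x.
  by move=> x Ax; exists x, 0; rewrite mul0r addr0.
have Bc c : B c c by exists 0, 1; rewrite mul1r add0r; split => //; exact/AI/in_ideal0.
have Bmeet c : ~ A c -> exists s, S s /\ B c s.
  move=> Ac; apply: NNPP => Hn; apply: (Amax (B c)).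
    by split; [exact: AB | move=> H; apply: Ac; apply: H; exact: Bc].
  split.
  - move=> x y [q1 [r1 [A1 ->]]] [q2 [r2 [A2 ->]]]; exists (q1 + q2), (r1 + r2).
    by split; [exact: AD | rewrite mulrDl addrACA].
  - move=> r x [q1 [r1 [A1 ->]]]; exists (r * q1), (r * r1).
    by split; [exact: AM | rewrite mulrDr mulrA].
  - by move=> s Ss Bs; apply: Hn; exists s.
  - by left => r /AI /AB.
have [s1 [S1' [q1 [r1 [A1 E1]]]]] := Bmeet a Aa.
have [s2 [S2' [q2 [r2 [A2 E2]]]]] := Bmeet b Ab.
apply: (AS (s1 * s2)); first exact: SM.
have -> : s1 * s2 = q1 * s2 + (q2 * (r1 * a) + (r1 * r2) * (a * b)).
  by rewrite E1 E2; ring.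
apply: (AD); first by rewrite mulrC; apply: (AM).
apply: (AD); first by rewrite mulrC; apply: (AM).
by apply: (AM).
Qed.
End Aux.

Lemma part_a (R : comPzRingType) : krull_dim_eq R 0 -> cohen_macaulay R.
Proof.
move=> [_ Hno] x Hx.
case: x Hx => [|x0 rest] Hx; first by split => //; left.
exfalso.
have := Hx 1%N isT; rewrite /= take0; case=> [//|[_ nu Hp]].
have [p [pp [px _]]] := @zorn_prime R [:: x0] (fun r => r = 1) erefl
  (fun a b ea eb => ltac:(by rewrite ea eb mulr1)) (fun r er => ltac:(by rewrite er)).
have px0 : p x0 := px _ (@in_ideal_gen R [:: x0] 0 isT).
have [a [n Hs]] := Hp p pp (fun i => ltac:(by rewrite ltnS leqn0 => /eqP ->)).
have [s [j [ps sj]]] : exists s j, ~ p s /\ s * x0 ^+ j = 0.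
  apply: NNPP => Hn.
  pose S r := exists s j, ~ p s /\ r = s * x0 ^+ j.
  have S1 : S 1 by exists 1, 0%N; split; [by case: pp | by rewrite mulr1].
  have SM : forall a b, S a -> S b -> S (a * b).
    move=> _ _ [s [j [ps ->]]] [t [k [pt ->]]]; exists (s * t), (j + k)%N; split.
      by case: pp => _ _ pM /pM [].
    by rewrite exprD; ring.
  have Sd : forall r, S r -> ~ in_ideal [::] r.
    by move=> _ [s [j [ps ->]]] /in_ideal_nil H; apply: Hn; exists s, j.
  have [q [qp [_ qS]]] := @zorn_prime R [::] S S1 SM Sd.
  apply: Hno; exists (fun i => if i == 0%N then q else p); split.
  - by move=> [|[|//]].
  - move=> i; rewrite ltnS leqn0 => /eqP -> /=; split.
      move=> r qr; apply: NNPP => pr; apply: (qS r) => //.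
      by exists r, 0%N; rewrite expr0 mulr1.
    exists x0; split => // qx; apply: (qS x0) qx; exists 1, 1%N; split.
      by case: pp.
    by rewrite mul1r expr1.
apply: (Hs s ps); exists (fun _ => 0), 0%N, j.
rewrite !big_ord1 /= expr0 mulr1 mul0r mul0r subr0.
by rewrite mulrA [x0 ^+ j * s]mulrC sj mul0r.
Qed.

Lemma zero_prime (R : idomainType) : is_prime_ideal (fun r : R => r = 0).
Proof.
split.
- split => // [a b -> ->|r a ->]; [by rewrite addr0 | by rewrite mulr0].
- exact/eqP/oner_neq0.
- by move=> a b /eqP; rewrite mulf_eq0 => /orP[] /eqP; [left|right].
Qed.

Lemma prime_notX (R : comPzRingType) (p : R -> Prop) s n :
  is_prime_ideal p -> ~ p s -> ~ p (s ^+ n).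
Proof.
move=> [_ p1 pM] ps; elim: n => [|n IH]; first by rewrite expr0.
by rewrite exprS => /pM [].
Qed.

Lemma part_b (R : idomainType) : krull_dim_eq R 1 -> cohen_macaulay R.
Proof.
move=> [_ Hno] x Hx.
case: x Hx => [|x0 rest] Hx; first by split => //; left.
have := Hx 1%N isT; rewrite /= take0; case=> [//|[_ nu Hp]].
have x0n0 : x0 != 0.
  apply/eqP => x00.
  have [a [n Hs]] := Hp _ (zero_prime R)
     (fun i => ltac:(by rewrite ltnS leqn0 => /eqP ->)).
  apply: (Hs 1); first exact/eqP/oner_neq0.
  exists (fun _ => 0), 0%N, 1%N.
  by rewrite !big_ord1 /= x00 expr1 mul0r.
case: rest Hx => [|x1 rest] Hx.
  split; last by right.
  move=> i; rewrite ltnS leqn0 => /eqP -> r /= /in_ideal_nil /eqP.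
  rewrite mulf_eq0 (negbTE x0n0) /= => /eqP ->; exact: in_ideal0.
exfalso.
have := Hx 2%N isT; rewrite /= take0; case=> [//|[_ nu2 Hp2]].
have [p [pp [px _]]] := @zorn_prime R [:: x0; x1] (fun r => r = 1) erefl
  (fun a b ea eb => ltac:(by rewrite ea eb mulr1)) (fun r er => ltac:(by rewrite er)).
have px0 : p x0 := px _ (@in_ideal_gen R [:: x0; x1] 0 isT).
have px1 : p x1 := px _ (@in_ideal_gen R [:: x0; x1] 1 isT).
have [a [n Hs]] := Hp2 p pp
   (fun i => ltac:(by case: i => [|[|//]])).
have [s [j [c [ps sj]]]] : exists s j c, ~ p s /\ s * x1 ^+ j = c * x0.
  apply: NNPP => Hn.
  pose S r := exists s j, ~ p s /\ r = s * x1 ^+ j.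
  have S1 : S 1 by exists 1, 0%N; split; [by case: pp | by rewrite mulr1].
  have SM : forall a b, S a -> S b -> S (a * b).
    move=> _ _ [s [j [ps ->]]] [t [k [pt ->]]]; exists (s * t), (j + k)%N; split.
      by case: pp => _ _ pM /pM [].
    by rewrite exprD; ring.
  have Sd : forall r, S r -> ~ in_ideal [:: x0] r.
    by move=> _ [s [j [ps ->]]] /in_ideal_1 [c H]; apply: Hn; exists s, j, c.
  have [q [qp [qx qS]]] := @zorn_prime R [:: x0] S S1 SM Sd.
  have qx0 : q x0 := qx _ (@in_ideal_gen R [:: x0] 0 isT).
  apply: Hno; exists (fun i => if i == 0%N then (fun r : R => r = 0)
                               else if i == 1%N then q else p); split.
  - by move=> [|[|[|//]]] _ //=; exact: zero_prime.
  - move=> [|[|//]] _ /=; split.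
    + by move=> r ->; case: qp => [[]].
    + by exists x0; split => //; apply/eqP.
    + move=> r qr; apply: NNPP => pr; apply: (qS r) => //.
      by exists r, 0%N; rewrite expr0 mulr1.
    + exists x1; split => // qx1; apply: (qS x1) qx1; exists 1, 1%N; split.
        by case: pp.
      by rewrite mul1r expr1.
apply: (Hs (s ^+ n)); first exact: prime_notX.
exists (fun i : 'I_2 => if val i == 0%N then a * c ^+ n else 0), (n + j * n)%N, 0%N.
have h : s ^+ n * x1 ^+ (j * n) = c ^+ n * x0 ^+ n.
  by rewrite exprM -exprMn sj exprMn.
rewrite expr0 mul1r !big_ord_recr !big_ord0 /=.
rewrite mul0r addr0 add0r mul1r !exprMn !exprD.
set X0 := x0 ^+ n; set Y0 := x0 ^+ (j * n); set X1 := x1 ^+ n.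
set Y1 := x1 ^+ (j * n); set Cn := c ^+ n; set Sn := s ^+ n.
have -> : Sn * a * (X0 * Y0 * (X1 * Y1)) = a * X0 * Y0 * X1 * (Sn * Y1) by ring.
rewrite h -/Cn -/X0; apply/eqP; rewrite subr_eq0; apply/eqP; ring.
Qed.

Theorem proposition4p4 :
  (forall R : comPzRingType, krull_dim_eq R 0 -> cohen_macaulay R) /\
  (forall R : idomainType, krull_dim_eq R 1 -> cohen_macaulay R).
Proof. split; [exact: part_a | exact: part_b]. Qed.
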